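(* Assume $\Delta^2=0$, constant budget $\Lambda(t)=\Lambda$, $\pi_0<1$ with $\pi_0\ge(1-\pi_0)/|G|$, and hypothesis (U). Then as $t\to\infty$ the expected per-stage cost of the semi-omniscient policy satisfies $$\mathbb E[M_t(\lambda^s)]\ge\frac{p_0Q(p_0Q+1-p_0)}{\pi_0\Lambda t}+O\!\left(\frac1{t^2}\right).$$
   Context: Model. There are $Q$ cells. At time $1$ each cell independently contains a target with probability $p_0\in(0,1)$; $\Psi(t)$ is the set of target locations at time $t$, the number of targets $|\Psi(1)|\sim\mathrm{Binomial}(Q,p_0)$ is constant in time, and at most one target occupies a cell. Each cell $j$ has a set $G(j)$ of neighbours with $|G(j)|=|G|$; $H(j)=\{j\}\cup G(j)$, $G(S)=\bigcup_{j\in S}G(j)$, $H(S)=S\cup G(S)$; neighbourhoods of distinct targets are disjoint. Between stages each target independently stays with probability $\pi_0$, otherwise moves to a uniformly chosen neighbour. Amplitudes: initial $\mathcal N(\mu_0,\sigma_0^2)$, random walk with $\mathcal N(0,\Delta^2)$ increments. Observations $y_i(t)=\sqrt{\lambda_i(t)}I_i(t)\theta_i(t)+n_i(t)$, $n_i(t)$ i.i.d. $\mathcal N(0,\sigma^2)$, efforts $\lambda_i(t)\ge0$, $\sum_i\lambda_i(t)\le\Lambda(t)$. Posterior precisions start at $c_i(1)=\sigma^2/\sigma_0^2$ and evolve by: for each target $n$ at $s^{(n)}(t)$ and each $i\in H(s^{(n)}(t))$, $1/c_i(t+1)=1/(c_{s^{(n)}(t)}(t)+\lambda_{s^{(n)}(t)}(t))+\Delta^2/\sigma^2$.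 The expected per-stage cost of a policy is $\mathbb E[M_t(\lambda)]=\mathbb E\big[\sum_{i\in\Psi(t)}1/(c_i(t)+\lambda_i(t))\big]$. Semi-omniscient policy: at stage $t$ it knows $\Psi(t-1)$, so $p_i(t)=\pi_0$ on $\Psi(t-1)$, $(1-\pi_0)/|G|$ on $G(\Psi(t-1))$, $0$ elsewhere, and allocates $\lambda^s(t)$ minimizing $\sum_ip_i(t)/(c_i(t)+\lambda_i)$ over $\lambda\ge0$, $\sum_i\lambda_i=\Lambda(t)$. Hypothesis (U): for every $t>1$, $c_i(t)=\bar c(t)$ for all $i\in H(\Psi(t-1))$, where $\bar c$ is the sequence with $\bar c(1)=\sigma^2/\sigma_0^2$ and $\bar c(t+1)=\frac{\pi_0^{3/2}+|G|^{-1/2}(1-\pi_0)^{3/2}}{\sqrt{\pi_0}+\sqrt{|G|(1-\pi_0)}}\big((1+|G|)\bar c(t)+\Lambda/|\Psi(1)|\big)$ if $\bar c(t)<c_{\mathrm{crit}}$ and $\bar c(t+1)=\bar c(t)+\pi_0\Lambda/|\Psi(1)|$ otherwise, with $c_{\mathrm{crit}}=\Lambda/(|\Psi(1)|e(\pi_0,G))$, $e(\pi_0,G)=\sqrt{|G|\pi_0/(1-\pi_0)}-1$. *)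

(* Defs.v *)
From HB Require Import structures.
From mathcomp Require Import all_boot all_order all_algebra.
Set Implicit Arguments. Unset Strict Implicit. Unset Printing Implicit Defensive.
Import Order.TTheory GRing.Theory Num.Theory.
Local Open Scope ring_scope.

Section Model.
Variables (R : archiRcfType) (T : finType).

Definition Hn (G : T -> {set T}) (j : T) : {set T} := j |: G j.
Definition GS (G : T -> {set T}) (S : {set T}) : {set T} := \bigcup_(j in S) G j.

Definition disjoint_nbhd (G : T -> {set T}) (S : {set T}) : Prop :=
  forall j k, j \in S -> k \in S -> j != k -> [disjoint Hn G j & Hn G k].

(* semi-omniscient prediction p_i(t) given Psi(t-1) = S, with g = |G| *)
Definition p_semi (G : T -> {set T}) (g : nat) (pi0 : R) (S : {set T}) (i : T) : R :=
  if i \in S then pi0 else if i \in GS G S then (1 - pi0) / g%:R else 0.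

Definition feasible (Lam : R) (lam : T -> R) : Prop :=
  (forall i, 0 <= lam i) /\ \sum_(i : T) lam i = Lam.

Definition semi_obj (p c lam : T -> R) : R := \sum_(i : T) p i / (c i + lam i).

Definition is_minimizer (Lam : R) (p c lam : T -> R) : Prop :=
  feasible Lam lam /\ forall lam', feasible Lam lam' -> semi_obj p c lam <= semi_obj p c lam'.

(* the mean-field precision sequence cbar of hypothesis (U), for N = |Psi(1)| targets *)
Definition ratio_coef (g : nat) (pi0 : R) : R :=
  (pi0 * Num.sqrt pi0 + (1 - pi0) * Num.sqrt (1 - pi0) / Num.sqrt g%:R)
  / (Num.sqrt pi0 + Num.sqrt (g%:R * (1 - pi0))).

Definition e_coef (g : nat) (pi0 : R) : R := Num.sqrt (g%:R * pi0 / (1 - pi0)) - 1.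

Definition c_crit (g : nat) (pi0 Lam : R) (N : nat) : R := Lam / (N%:R * e_coef g pi0).

Definition cbar_step (g : nat) (pi0 Lam : R) (N : nat) (c : R) : R :=
  if c < c_crit g pi0 Lam N then ratio_coef g pi0 * ((1 + g%:R) * c + Lam / N%:R)
  else c + pi0 * Lam / N%:R.

(* cbar_aux n = cbar(n+1) *)
Fixpoint cbar_aux (g : nat) (pi0 Lam sigma2 sigma02 : R) (N : nat) (n : nat) : R :=
  if n is m.+1 then cbar_step g pi0 Lam N (cbar_aux g pi0 Lam sigma2 sigma02 N m)
  else sigma2 / sigma02.

Definition cbar g pi0 Lam sigma2 sigma02 N (t : nat) : R :=
  cbar_aux g pi0 Lam sigma2 sigma02 N t.-1.

(* movement of the targets between stages t-1 and t: each target s in S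
   goes to f s, with f s = s (prob. pi0) or f s in G(s) (prob. (1-pi0)/|G|) *)
Definition move_ok (G : T -> {set T}) (S : {set T}) (f : {ffun T -> T}) : bool :=
  [forall x, if x \in S then f x \in Hn G x else f x == x].

Definition move_prob (g : nat) (pi0 : R) (S : {set T}) (f : {ffun T -> T}) : R :=
  \prod_(s in S) (if f s == s then pi0 else (1 - pi0) / g%:R).

(* Expected per-stage cost E[M_t(lambda^s)] at stage t, when Psi(t-1) has law mu,
   the precisions on H(Psi(t-1)) are cbar(t) (hypothesis (U)), the efforts are
   lam (S = Psi(t-1)), and Psi(t) = f @: Psi(t-1). *)
Definition exp_cost (G : T -> {set T}) (g : nat) (pi0 Lam sigma2 sigma02 : R)
    (mu : {set T} -> R) (lam : {set T} -> T -> R) (t : nat) : R :=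
  \sum_(S : {set T}) mu S *
    \sum_(f : {ffun T -> T} | move_ok G S f) move_prob g pi0 S f *
      \sum_(i in f @: S) 1 / (cbar g pi0 Lam sigma2 sigma02 #|S| t + lam S i).

Definition ge_plus_O_inv_sq (u : nat -> R) (a : R) : Prop :=
  exists C : R, exists t0 : nat, forall t : nat, (t0 <= t)%N ->
    a / t%:R - C / (t%:R ^+ 2) <= u t.

End Model.

(* Main.v *)
Require Import Defs.
From HB Require Import structures.
From mathcomp Require Import all_boot all_order all_algebra.
From mathcomp Require Import ring lra.
Import Order.TTheory GRing.Theory Num.Theory.
Local Open Scope ring_scope.

Definition bb {R : archiRcfType} (p : R) (n N : nat) : R := 'C(n, N)%:R * p ^+ N * (1 - p) ^+ (n - N).

Lemma bb0 (R : archiRcfType) (p : R) n : \sum_(N < n.+1) bb p n N = 1.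
Proof.
have := exprDn (1 - p) p n; rewrite subrK expr1n => ->.
apply: eq_bigr => i _; rewrite /bb -mulr_natl; ring.
Qed.


Lemma bb_shift (R : archiRcfType) (p : R) n (F : nat -> R) :
  \sum_(N < n.+2) bb p n.+1 N * (N%:R * F N) =
  n.+1%:R * p * \sum_(k < n.+1) bb p n k * F k.+1.
Proof.
rewrite big_ord_recl /= mul0r mulr0 add0r mulr_sumr.
apply: eq_bigr => i _; rewrite /bb /bump /= subSS.
have H := mul_bin_diag n.+1 i; rewrite /= in H.
have : (i.+1 * 'C(n.+1, i.+1))%:R = (n.+1 * 'C(n, i))%:R :> R by rewrite H.
rewrite !natrM => E.
rewrite exprS.
transitivity ((i.+1%:R * 'C(n.+1, i.+1)%:R) * p * p ^+ i * (1 - p) ^+ (n - i) * F i.+1); first by rewrite add1n; ring.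
rewrite E; ring.
Qed.

Lemma bb1 (R : archiRcfType) (p : R) n : \sum_(N < n.+1) bb p n N * N%:R = n%:R * p.
Proof.
case: n => [|n]; first by rewrite big_ord1 mulr0 mul0r.
transitivity (\sum_(N < n.+2) bb p n.+1 N * (N%:R * 1)).
  by apply: eq_bigr => i _; rewrite mulr1.
by rewrite (bb_shift R p n (fun _ => 1)); under eq_bigr do rewrite mulr1; rewrite bb0 mulr1.
Qed.

Lemma bb2 (R : archiRcfType) (p : R) n : \sum_(N < n.+1) bb p n N * N%:R ^+ 2 = n%:R * p * (n%:R * p + 1 - p).
Proof.
case: n => [|n]; first by rewrite big_ord1 /= expr0n !mul0r mulr0.
transitivity (\sum_(N < n.+2) bb p n.+1 N * (N%:R * N%:R)).
  by apply: eq_bigr => i _; rewrite expr2.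
rewrite (bb_shift R p n (fun N => N%:R)).
have -> : \sum_(k < n.+1) bb p n k * k.+1%:R = \sum_(k < n.+1) bb p n k * k%:R + \sum_(k < n.+1) bb p n k.
  by rewrite -big_split; apply: eq_bigr => i _ /=; rewrite -natr1; ring.
rewrite bb1 bb0 -natr1; ring.
Qed.

Lemma bb_widen (R : archiRcfType) (p : R) n M (F : nat -> R) : (n <= M)%N ->
  \sum_(N < M.+1) bb p n N * F N = \sum_(N < n.+1) bb p n N * F N.
Proof.
move=> nM; rewrite [RHS](big_ord_widen M.+1 (fun N => bb p n N * F N)) //.
rewrite [RHS]big_mkcond; apply: eq_bigr => i _.
case: ifP => // H; rewrite /bb bin_small ?mul0r //.
by rewrite ltnNge -ltnS H.
Qed.

Lemma move_sum1 (R : archiRcfType) (T : finType) (G : T -> {set T}) (g : nat) (pi0 : R) (S : {set T}) :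
  (0 < g)%N -> (forall j, #|G j| = g) -> (forall j, j \notin G j) ->
  \sum_(f : {ffun T -> T} | move_ok G S f) move_prob g pi0 S f = 1.
Proof.
move=> Hg HG HGirr.
pose Q := fun i : T => [pred j : T | if i \in S then j \in Hn G i else j == i].
pose F := fun i j : T => if i \in S then (if j == i then pi0 else (1 - pi0) / g%:R) else 1.
transitivity (\sum_(f in family Q) \prod_i F i (f i)).
  apply: eq_big => f.
    rewrite /move_ok; apply/forallP/familyP => H x; [rewrite inE; exact: H | by move: (H x); rewrite inE].
  move=> _; rewrite /move_prob big_mkcond; apply: eq_bigr => i _.
  by rewrite /F; case: (i \in S).
rewrite -bigA_distr_big_dep; apply: big1 => i _.
rewrite /F /Q; case: (boolP (i \in S)) => iS /=.
  rewrite (bigD1 i) /=; last by rewrite /Hn setU11.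
  rewrite eqxx.
  transitivity (pi0 + \sum_(j in G i) (1 - pi0) / g%:R).
    congr (_ + _); apply: eq_big => j.
      rewrite /Hn in_setU1; case: (j =P i) => [->|]; first by rewrite (negbTE (HGirr i)).
      by move=> _; rewrite andbT.
    by move=> /andP[_ /negbTE ->].
  rewrite sumr_const HG -[_ *+ g]mulr_natr.
  have gn0 : g%:R != 0 :> R by rewrite pnatr_eq0 -lt0n.
  by rewrite divfK // addrC subrK.
by rewrite (big_pred1 i) // => j; rewrite !inE.
Qed.

Lemma cbar_pos (R : archiRcfType) g (pi0 Lam s2 s02 : R) N n :
  0 < ratio_coef g pi0 -> 0 <= Lam / N%:R -> 0 <= pi0 * Lam / N%:R -> 0 < s2 / s02 ->
  0 < cbar_aux g pi0 Lam s2 s02 N n.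
Proof.
move=> Hr H1 H2 Hs; elim: n => [|n IH] //=.
rewrite /cbar_step; case: ifP => _.
  apply: mulr_gt0 => //; apply: ltr_wpDr => //.
  by apply: mulr_gt0 => //; apply: ltr_wpDr.
exact: ltr_wpDr.
Qed.

Lemma cbar_ub (R : archiRcfType) g (pi0 Lam s2 s02 : R) N n :
  0 <= ratio_coef g pi0 -> 0 <= pi0 * Lam / N%:R ->
  cbar_aux g pi0 Lam s2 s02 N n <=
   Num.max (s2 / s02) (ratio_coef g pi0 * ((1 + g%:R) * c_crit g pi0 Lam N + Lam / N%:R))
   + n%:R * (pi0 * Lam / N%:R).
Proof.
move=> Hr H2; elim: n => [|n IH] /=.
  by rewrite mul0r addr0 le_max lexx.
set B := Num.max _ _; rewrite /cbar_step; case: ifP => Hc.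
  apply: (le_trans (y := B)); last by rewrite lerDl mulr_ge0.
  apply: (le_trans (y := ratio_coef g pi0 * ((1 + g%:R) * c_crit g pi0 Lam N + Lam / N%:R))); last by rewrite le_max lexx orbT.
  apply: ler_wpM2l => //; rewrite lerD2r; apply: ler_wpM2l; last exact: ltW.
  by rewrite addr_ge0.
rewrite -natr1 mulrDl mul1r addrA lerD2r //.
Qed.

Lemma key_ineq (R : archiRcfType) (A K n x : R) :
  0 < A -> 0 < K -> 0 < n -> 0 < x ->
  n ^+ 2 / (A * x) - n ^+ 3 * K / (A ^+ 2 * x ^+ 2) <= n / (K + x * (A / n)).
Proof.
move=> HA HK Hn Hx.
have h1 : 0 < n * K + A * x by rewrite addr_gt0 // mulr_gt0.
have -> : n / (K + x * (A / n)) = n ^+ 2 / (n * K + A * x).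
  by field; rewrite ?gt_eqF //.
have -> : n ^+ 2 / (A * x) - n ^+ 3 * K / (A ^+ 2 * x ^+ 2) =
   n ^+ 2 * (A * x - n * K) / (A ^+ 2 * x ^+ 2).
  by field; rewrite ?gt_eqF.
rewrite ler_pdivrMr ?mulr_gt0 ?exprn_gt0 //.
rewrite [X in _ <= X]mulrAC ler_pdivlMr //.
have := sqr_ge0 (n ^+ 2 * K); nra.
Qed.

Theorem proposition2
  (R : archiRcfType) (T : finType)
  (Q : nat) (p0 : R) (G : T -> {set T}) (g : nat)
  (pi0 Delta Lam sigma2 sigma02 : R)
  (mu : nat -> {set T} -> R) (lam : nat -> {set T} -> T -> R)
  (Hp0 : 0 < p0 < 1)
  (Hg : (0 < g)%N)
  (HG : forall j, #|G j| = g)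
  (HGirr : forall j, j \notin G j)
  (Hsig : 0 < sigma2) (Hsig0 : 0 < sigma02)
  (HLam : 0 < Lam)
  (HDelta : Delta ^+ 2 = 0)
  (Hpi1 : pi0 < 1)
  (Hpi2 : (1 - pi0) / g%:R <= pi0)
  (Hmu_nonneg : forall t S, 0 <= mu t S)
  (Hmu_supp : forall t S, mu t S != 0 -> disjoint_nbhd G S)
  (Hmu_binom : forall t (N : nat),
      \sum_(S : {set T} | #|S| == N) mu t S
        = 'C(Q, N)%:R * p0 ^+ N * (1 - p0) ^+ (Q - N))
  (Hlam : forall (t : nat) (S : {set T}), (2 <= t)%N ->
      is_minimizer Lam (p_semi G g pi0 S)
        (fun _ => cbar g pi0 Lam sigma2 sigma02 #|S| t) (lam t S)) :
  ge_plus_O_inv_sq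
    (fun t => exp_cost G g pi0 Lam sigma2 sigma02 (mu t) (lam t) t)
    (p0 * Q%:R * (p0 * Q%:R + 1 - p0) / (pi0 * Lam)).
Proof.
have gpos : 0 < g%:R :> R by rewrite ltr0n.
have pi0_pos : 0 < pi0.
  apply: lt_le_trans Hpi2; apply: divr_gt0 => //; by rewrite subr_gt0.
have Hr : 0 < ratio_coef g pi0.
  rewrite /ratio_coef; apply: divr_gt0.
    apply: ltr_wpDr; last by apply: mulr_gt0 => //; rewrite sqrtr_gt0.
    apply: divr_ge0; last exact: sqrtr_ge0.
    by apply: mulr_ge0; [rewrite subr_ge0 ltW | exact: sqrtr_ge0].
  by apply: ltr_wpDr; [exact: sqrtr_ge0 | rewrite sqrtr_gt0].
have Hs : 0 < sigma2 / sigma02 by apply: divr_gt0.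
have HA : 0 < pi0 * Lam by apply: mulr_gt0.
have Hp0' : 0 < p0 by case/andP: Hp0.
have Hq0 : 0 < 1 - p0 by case/andP: Hp0 => _; rewrite subr_gt0.
pose K := fun N : nat => Num.max (sigma2 / sigma02)
   (ratio_coef g pi0 * ((1 + g%:R) * c_crit g pi0 Lam N + Lam / N%:R)) + Lam.
pose M := maxn Q #|T|.
pose C := \sum_(N < M.+1) bb p0 Q N * (N%:R ^+ 3 * K N / (pi0 * Lam) ^+ 2).
exists C, 2%N => t Ht.
have Hx : 0 < t%:R :> R by rewrite ltr0n (leq_trans _ Ht).
pose h := fun N : nat => N%:R / (cbar g pi0 Lam sigma2 sigma02 N t + Lam).
have cpos : forall N, 0 < cbar g pi0 Lam sigma2 sigma02 N t.
  move=> N; rewrite /cbar; apply: cbar_pos => //.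
    by apply: divr_ge0; [exact: ltW | exact: ler0n].
  by apply: divr_ge0; [exact: ltW | exact: ler0n].
have bbge0 : forall N, 0 <= bb p0 Q N.
  move=> N; rewrite /bb; apply: mulr_ge0; [apply: mulr_ge0 => //| ];
  by apply: exprn_ge0; apply: ltW.
have step1 : \sum_S mu t S * h #|S| <= exp_cost G g pi0 Lam sigma2 sigma02 (mu t) (lam t) t.
  rewrite /exp_cost; apply: ler_sum => S _.
  case: (eqVneq (mu t S) 0) => [->|mu0]; first by rewrite !mul0r.
  apply: ler_wpM2l => //.
  have Hdis := Hmu_supp t S mu0.
  have [[Hnn Hsum] _] := Hlam t S Ht.
  set c := cbar g pi0 Lam sigma2 sigma02 #|S| t.
  have cp : 0 < c := cpos #|S|.
  have E1 := move_sum1 R T G g pi0 S Hg HG HGirr.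
  rewrite -[h _]mul1r -{1}E1 mulr_suml.
  apply: ler_sum => f Hf; apply: ler_wpM2l.
    apply: prodr_ge0 => s _; case: ifP => _; first exact: ltW.
    by apply: divr_ge0; [rewrite subr_ge0 ltW | exact: ler0n].
  have inj : {in S &, injective f}.
    move=> x y xS yS Exy; apply/eqP/negPn/negP => nxy.
    have D := Hdis x y xS yS nxy.
    move/forallP: Hf => Hf.
    have := Hf x; have := Hf y; rewrite xS yS => fy fx.
    by move: fy; rewrite -Exy (disjointFr D fx).
  apply: (le_trans (y := \sum_(i in f @: S) 1 / (c + Lam))).
    rewrite sumr_const card_in_imset // /h -/c div1r mulrC mulr_natr.
    exact: lexx.
  apply: ler_sum => i _; rewrite !div1r lef_pV2 ?posrE.
  - rewrite lerD2l -Hsum (bigD1 i) //= lerDl; exact: sumr_ge0.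
  - exact: addr_gt0.
  - exact: ltr_wpDr (Hnn i) cp.
have step2 : \sum_S mu t S * h #|S| = \sum_(N < M.+1) bb p0 Q N * h N.
  transitivity (\sum_(S : {set T}) \sum_(N < M.+1 | #|S| == N) mu t S * h N).
    apply: eq_bigr => S _.
    have hS : (#|S| < M.+1)%N by rewrite ltnS (leq_trans (max_card S)) // leq_maxr.
    by rewrite (big_pred1 (Ordinal hS)) // => N; rewrite /= -val_eqE /= eq_sym.
  rewrite (exchange_big_dep xpredT) //=; apply: eq_bigr => N _.
  by rewrite -mulr_suml Hmu_binom.
have step3 : \sum_(N < M.+1) bb p0 Q N *
     (N%:R ^+ 2 / (pi0 * Lam * t%:R) - N%:R ^+ 3 * K N / ((pi0 * Lam) ^+ 2 * t%:R ^+ 2))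
   <= \sum_(N < M.+1) bb p0 Q N * h N.
  apply: ler_sum => -[[|n] Hn] _; apply: ler_wpM2l => //=.
    by rewrite /h !expr0n /= !mul0r subr0.
  have Hnn : 0 < n.+1%:R :> R by rewrite ltr0n.
  have HK : 0 < K n.+1 by rewrite /K; apply: addr_gt0 => //; rewrite lt_max Hs.
  apply: le_trans (@key_ineq R _ _ _ _ HA HK Hnn Hx) _.
  rewrite /h ler_pM2l // lef_pV2 ?posrE.
  - rewrite /K addrAC lerD2r /cbar; apply: le_trans (cbar_ub _ _ _ _ _ _ _ _ _ _) _.
    + exact: ltW.
    + by apply: divr_ge0; [exact: ltW | exact: ler0n].
    rewrite lerD2l ler_wpM2r ?ler_nat ?leq_pred //.
    by apply: divr_ge0; [exact: ltW | exact: ler0n].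
  - by apply: addr_gt0 => //; apply: mulr_gt0 => //; apply: divr_gt0.
  - exact: addr_gt0.
have step4 : \sum_(N < M.+1) bb p0 Q N *
     (N%:R ^+ 2 / (pi0 * Lam * t%:R) - N%:R ^+ 3 * K N / ((pi0 * Lam) ^+ 2 * t%:R ^+ 2))
   = (\sum_(N < M.+1) bb p0 Q N * N%:R ^+ 2) / (pi0 * Lam * t%:R) - C / t%:R ^+ 2.
  rewrite !mulr_suml -sumrB; apply: eq_bigr => N _.
  by field; rewrite ?gt_eqF.
rewrite /= (le_trans _ step1) // step2 (le_trans _ step3) // step4.
rewrite (bb_widen R p0 Q M (fun N => N%:R ^+ 2)) ?leq_maxl // bb2.
rewrite lerD2r le_eqVlt; apply/orP; left; apply/eqP.
by field; rewrite ?gt_eqF.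
Qed.
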